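(* Let $\mathcal{X}\subseteq\mathbb{R}^N$ and let $K_k(\mathbf{x},\mathbf{y})=(\mathbf{x}^\top\mathbf{y}+1)^k$ be the polynomial kernel of degree $k$ on $\mathcal{X}$. Let $\kappa_k=\sup_{x\in\mathcal{X}}\sqrt{K_k(x,x)}$, let $H_k=\{x\mapsto \pm K_k(x,x') : x'\in\mathcal{X}\}$, and let $d_k=\binom{N+k}{k}$ be the dimension of the feature space of $K_k$. Then for any sample $S=(x_1,\dots,x_m)$ of points of $\mathcal{X}$, \[ \widehat{\mathfrak{R}}_S(H_k)\le 12\,\kappa_k^2\sqrt{\frac{\pi d_k}{m}}. \]
   Context: For a set $H$ of real-valued functions on $\mathcal{X}$, the empirical Rademacher complexity on $S$ is $\widehat{\mathfrak{R}}_S(H)=\frac1m\mathbb{E}_\sigma\big[\sup_{h\in H}\sum_{i=1}^m\sigma_ih(x_i)\big]$, where $\sigma_1,\dots,\sigma_m$ are independent random variables uniformly distributed on $\{-1,+1\}$. *)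

(* Defs.v *)
From HB Require Import structures.
From mathcomp Require Import all_boot all_order all_algebra.
From mathcomp Require Import all_classical all_reals.
From mathcomp Require Import ereal trigo.
Set Implicit Arguments. Unset Strict Implicit. Unset Printing Implicit Defensive.
Import Order.TTheory GRing.Theory Num.Theory.
Local Open Scope ring_scope.
Local Open Scope classical_set_scope.

Definition poly_kernel (R : realType) (N k : nat) (x y : 'rV[R]_N) : R :=
  ((\sum_(j < N) x ord0 j * y ord0 j) + 1) ^+ k.

(* kappa_k = sup_{x in X} sqrt(K_k(x,x)), in the extended reals
   (it is +oo when X is unbounded, -oo when X is empty). *)
Definition kappa (R : realType) (N k : nat) (X : set 'rV[R]_N) : \bar R :=
  ereal_sup [set (Num.sqrt (poly_kernel k x x))%:E | x in X].

Definition Hk (R : realType) (N k : nat) (X : set 'rV[R]_N) : set ('rV[R]_N -> R) :=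
  [set h | exists s : R, exists2 x', (s = 1 \/ s = -1) /\ X x' &
                                    h = fun x => s * poly_kernel k x x'].

(* Rademacher sign: sigma_i = (-1)^(b_i), with b uniform on {0,1}^m. *)
Definition rsign (R : realType) (b : bool) : R := (-1) ^+ b.

(* Empirical Rademacher complexity of H on the sample S = (x_1,...,x_m):
   (1/m) E_sigma [ sup_{h in H} sum_i sigma_i h(x_i) ], where sigma is uniform
   on {-1,+1}^m, i.e. the expectation is the average over all 2^m sign vectors. *)
Definition emp_rademacher (R : realType) (T : Type) (m : nat)
    (H : set (T -> R)) (S : 'I_m -> T) : \bar R :=
  ((m%:R)^-1 * (2 ^+ m)^-1)%:E *
  (\sum_(b : {ffun 'I_m -> bool})
     ereal_sup [set (\sum_(i < m) rsign R (b i) * h (S i))%:E | h in H])%E.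

(* Main.v *)
Require Import Defs.
From HB Require Import structures.
From mathcomp Require Import all_boot all_order all_algebra.
From mathcomp Require Import all_classical all_reals.
From mathcomp Require Import ereal trigo.
From mathcomp Require Import ring lra.
Import Order.TTheory GRing.Theory Num.Theory.
Local Open Scope ring_scope.

Section CS.
Variable R : realType.

Lemma cs2 (I : finType) (v w : I -> R) :
  (\sum_i v i * w i) ^+ 2 <= (\sum_i v i ^+ 2) * (\sum_i w i ^+ 2).
Proof.
have H : 0 <= \sum_a \sum_b (v a * w b - v b * w a) ^+ 2.
  by apply: sumr_ge0 => a _; apply: sumr_ge0 => b _; exact: sqr_ge0.
have E : \sum_a \sum_b (v a * w b - v b * w a) ^+ 2 =
   (\sum_a \sum_b v a ^+2 * w b ^+2) + (\sum_a \sum_b v b ^+2 * w a ^+2)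
   - 2 * \sum_a \sum_b (v a * w a) * (v b * w b).
  rewrite mulr_sumr -!big_split -sumrN -big_split /=; apply: eq_bigr => a _.
  rewrite mulr_sumr -!big_split -sumrN -big_split /=; apply: eq_bigr => b _.
  ring.
have E1 : \sum_a \sum_b v a ^+2 * w b ^+2 = (\sum_i v i ^+ 2) * (\sum_i w i ^+ 2).
  by rewrite mulr_suml; apply: eq_bigr => a _; rewrite mulr_sumr.
have E2 : \sum_a \sum_b v b ^+2 * w a ^+2 = (\sum_i v i ^+ 2) * (\sum_i w i ^+ 2).
  by rewrite exchange_big.
have E3 : \sum_a \sum_b (v a * w a) * (v b * w b) = (\sum_i v i * w i) ^+ 2.
  by rewrite expr2 mulr_suml; apply: eq_bigr => a _; rewrite mulr_sumr.
rewrite E E1 E2 E3 in H; lra.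
Qed.

Lemma cs (I : finType) (v w : I -> R) :
  \sum_i v i * w i <= Num.sqrt (\sum_i v i ^+ 2) * Num.sqrt (\sum_i w i ^+ 2).
Proof.
rewrite -sqrtrM; last by apply: sumr_ge0 => i _; exact: sqr_ge0.
apply: (le_trans (ler_norm _)).
rewrite -sqrtr_sqr ler_sqrt ?cs2 //.
by apply: mulr_ge0; apply: sumr_ge0 => i _; exact: sqr_ge0.
Qed.
End CS.

Section Feat.
Variables (R : realType) (N k : nat).

Definition xt (x : 'rV[R]_N) (j : 'I_N.+1) : R :=
  oapp (fun j' : 'I_N => x ord0 j') 1 (insub (val j)).

Definition phi (x : 'rV[R]_N) (f : {ffun 'I_k -> 'I_N.+1}) : R :=
  \prod_(t < k) xt x (f t).

Lemma K_feat x y : poly_kernel k x y = \sum_f phi x f * phi y f.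
Proof.
rewrite /poly_kernel.
have -> : \sum_(j < N) x ord0 j * y ord0 j + 1 = \sum_(j < N.+1) xt x j * xt y j.
  rewrite big_ord_recr /=; congr (_ + _).
    by apply: eq_bigr => i _; rewrite /xt /= valK.
  by rewrite /xt /= insubF ?ltnn // mulr1.
rewrite -[in X in _ ^+ X](card_ord k) -prodr_const bigA_distr_bigA /=.
by apply: eq_bigr => f _; rewrite -big_split.
Qed.

Lemma K_diag x : poly_kernel k x x = \sum_f phi x f ^+ 2.
Proof. by rewrite K_feat; apply: eq_bigr => f _; rewrite expr2. Qed.
End Feat.
Arguments phi {R N} k x f.
Arguments xt {R N} x j.
Arguments K_diag {R N} k x.
Section Orth.
Variables (R : realType) (m : nat).

Lemma rsign_sq (b : bool) : rsign R b * rsign R b = 1.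
Proof. by case: b; rewrite /rsign /= ?mulr1 ?mulrNN ?mulr1. Qed.

Definition flip (i : 'I_m) (b : {ffun 'I_m -> bool}) : {ffun 'I_m -> bool} :=
  [ffun t => if t == i then ~~ b t else b t].

Lemma flipK i : involutive (flip i).
Proof.
move=> b; apply/ffunP => t; rewrite !ffunE.
by case: (t == i) => //; rewrite negbK.
Qed.

Lemma rad_orth (i j : 'I_m) :
  \sum_(b : {ffun 'I_m -> bool}) rsign R (b i) * rsign R (b j) =
  if i == j then (2 ^ m)%:R else 0.
Proof.
case: eqP => [<-|/eqP nij].
  under eq_bigr do rewrite rsign_sq.
  by rewrite sumr_const card_ffun card_bool card_ord.
set s := (X in X = _).
have : s = - s.
  rewrite /s {1}(reindex_inj (can_inj (flipK i))) -sumrN.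
  apply: eq_bigr => b _; rewrite !ffunE eqxx eq_sym.
  rewrite (negbTE nij).
  by case: (b i); rewrite /rsign /= ?mulr1 ?mulN1r ?mul1r ?opprK.
lra.
Qed.
End Orth.
Section Sq.
Variables (R : realType) (N k m : nat) (S : 'I_m -> 'rV[R]_N).

Lemma sumsq :
  \sum_(b : {ffun 'I_m -> bool}) \sum_f (\sum_i rsign R (b i) * phi k (S i) f) ^+ 2
  = (2 ^ m)%:R * \sum_i poly_kernel k (S i) (S i).
Proof.
transitivity (\sum_f \sum_i \sum_j phi k (S i) f * phi k (S j) f *
   \sum_(b : {ffun 'I_m -> bool}) rsign R (b i) * rsign R (b j)).
  rewrite exchange_big; apply: eq_bigr => f _.
  have E : forall i j, phi k (S i) f * phi k (S j) f *
     \sum_(b : {ffun 'I_m -> bool}) rsign R (b i) * rsign R (b j) =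
     \sum_(b : {ffun 'I_m -> bool}) (rsign R (b i) * phi k (S i) f) * (rsign R (b j) * phi k (S j) f).
    by move=> i j; rewrite mulr_sumr; apply: eq_bigr => b _; ring.
  under [RHS]eq_bigr do under eq_bigr do rewrite E.
  under [RHS]eq_bigr do rewrite exchange_big.
  rewrite [RHS]exchange_big; apply: eq_bigr => b _.
  rewrite expr2 mulr_suml; apply: eq_bigr => i _; by rewrite mulr_sumr.
under eq_bigr do under eq_bigr do under eq_bigr do rewrite rad_orth.
rewrite mulr_sumr exchange_big; apply: eq_bigr => i _.
rewrite K_diag mulr_sumr; apply: eq_bigr => f _.
rewrite (bigD1 i) //= eqxx big1 ?addr0.
  by rewrite [RHS]mulrC expr2.
by move=> j /negbTE; rewrite eq_sym => ->; rewrite mulr0.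
Qed.
End Sq.

Local Open Scope classical_set_scope.

Theorem lemma2 (R : realType) (N k : nat) (X : set 'rV[R]_N)
    (m : nat) (hm : (0 < m)%N) (S : 'I_m -> 'rV[R]_N)
    (hS : forall i, X (S i)) :
  (emp_rademacher (Hk k X) S <=
   (12 * Num.sqrt (pi * ('C(N + k, k))%:R / m%:R))%:E *
   (kappa k X * kappa k X))%E.
Proof.
set d : R := ('C(N + k, k))%:R.
set M : R := m%:R.
set c := 12 * Num.sqrt (pi * d / M).
have M0 : 0 < M by rewrite ltr0n.
have d1 : 1 <= d by rewrite ler1n bin_gt0 leq_addl.
have d0 : 0 <= d by rewrite ler0n.
have pid0 : 0 <= pi * d / M.
  by rewrite divr_ge0 ?ler0n // mulr_ge0 // (ltW (pi_gt0 R)).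
have c0 : 0 < c.
  rewrite mulr_gt0 // sqrtr_gt0 divr_gt0 // mulr_gt0 ?pi_gt0 //.
  exact: lt_le_trans ltr01 d1.
have c2 : c ^+ 2 = 144 * (pi * d / M) by rewrite exprMn sqr_sqrtr // -natrX.
have X0 : X (S (Ordinal hm)) by [].
have ub : forall x', X x' -> ((Num.sqrt (poly_kernel k x' x'))%:E <= kappa k X)%E.
  by move=> x' Xx; apply: ereal_sup_ubound; exists x'.
case Hkap: (kappa k X) ub => [r||] ub.
- have r0 : 0 <= r by have := ub _ X0; rewrite lee_fin => /(le_trans (sqrtr_ge0 _)).
  have rb : forall x', X x' -> Num.sqrt (poly_kernel k x' x') <= r.
    by move=> x' /ub; rewrite lee_fin.
  set A := fun b : {ffun 'I_m -> bool} =>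
    Num.sqrt (\sum_f (\sum_i rsign R (b i) * phi k (S i) f) ^+ 2).
  have hb : forall b : {ffun 'I_m -> bool}, (ereal_sup [set (\sum_(i < m) rsign R (b i) * h (S i))%:E | h in Hk k X] <= (A b * r)%:E)%E.
    move=> b; apply: ge_ereal_sup => _ [h [s [x' [hs Xx'] ->]] <-]; rewrite lee_fin /=.
    have E : \sum_i rsign R (b i) * (s * poly_kernel k (S i) x') =
       \sum_f (s * \sum_i rsign R (b i) * phi k (S i) f) * phi k x' f.
      under eq_bigr do rewrite K_feat mulr_sumr mulr_sumr.
      rewrite exchange_big; apply: eq_bigr => f _.
      rewrite mulr_sumr mulr_suml; apply: eq_bigr => i _; ring.
    rewrite E; apply: le_trans (cs _ _ _ _) _.
    have -> : \sum_f (s * \sum_i rsign R (b i) * phi k (S i) f) ^+ 2 =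
              \sum_f (\sum_i rsign R (b i) * phi k (S i) f) ^+ 2.
      apply: eq_bigr => f _; rewrite exprMn.
      by case: hs => ->; rewrite ?sqrrN expr1n mul1r.
    by rewrite -K_diag ler_wpM2l ?sqrtr_ge0 ?rb.
  rewrite /emp_rademacher.
  set P : R := 2 ^+ m.
  have P0 : 0 < P by rewrite exprn_gt0.
  apply: (@le_trans _ _ ((M^-1 * P^-1)%:E * \sum_(b : {ffun 'I_m -> bool}) (A b * r)%:E)%E).
    apply: lee_wpmul2l; first by rewrite lee_fin mulr_ge0 // invr_ge0 ltW.
    by apply: lee_sum => b _; exact: hb.
  rewrite sumEFin -!EFinM lee_fin -mulr_suml.
  set T := \sum_b A b.
  have T0 : 0 <= T by apply: sumr_ge0 => b _; exact: sqrtr_ge0.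
  have HT : T ^+ 2 <= P * (P * (M * r ^+ 2)).
    apply: (@le_trans _ _ ((\sum_b A b ^+ 2) * \sum_(b : {ffun 'I_m -> bool}) 1 ^+ 2)).
      rewrite /T -[X in X ^+ 2 <= _](eq_bigr _ (fun b _ => mulr1 (A b))); exact: cs2.
    have -> : \sum_(b : {ffun 'I_m -> bool}) (1 : R) ^+ 2 = P.
      by rewrite /P sumr_const card_ffun card_bool card_ord expr1n natrX.
    have -> : \sum_b A b ^+ 2 = P * \sum_i poly_kernel k (S i) (S i).
      rewrite /P -natrX -sumsq; apply: eq_bigr => b _.
      by rewrite /A sqr_sqrtr //; apply: sumr_ge0 => f _; exact: sqr_ge0.
    rewrite mulrC ler_wpM2l ?(ltW P0) // ler_wpM2l ?(ltW P0) //.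
    have -> : M * r ^+ 2 = \sum_(i < m) r ^+ 2 by rewrite sumr_const card_ord mulr_natl.
    apply: ler_sum => i _.
    have Kge : 0 <= poly_kernel k (S i) (S i).
      by rewrite K_diag; apply: sumr_ge0 => f _; exact: sqr_ge0.
    rewrite -(sqr_sqrtr Kge) !expr2; apply: ler_pM; rewrite ?sqrtr_ge0 ?rb //.
  have key : M^-1 * P^-1 * T <= c * r.
    rewrite -ler_sqr ?nnegrE; last 2 first.
      by rewrite mulr_ge0 // mulr_ge0 // invr_ge0 ltW.
      by rewrite mulr_ge0 // ltW.
    apply: (@le_trans _ _ (r ^+ 2 / M)).
      rewrite exprMn; apply: le_trans (ler_wpM2l (sqr_ge0 _) HT) _.
      rewrite le_eqVlt; apply/orP; left; apply/eqP.
      by field; apply/andP; split; rewrite gt_eqF.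
    rewrite exprMn c2.
    have h144 : 1 <= 144 * (pi * d).
      have := pi_ge2 R; nra.
    have -> : 144 * (pi * d / M) * r ^+ 2 = (r ^+ 2 / M) * (144 * (pi * d)) by ring.
    by rewrite ler_peMr // divr_ge0 ?sqr_ge0 // ltW.
  by rewrite mulrA [c * _]mulrA ler_wpM2r.
- by rewrite mulyy mulry gtr0_sg // mul1e leey.
- have := ub _ X0; by rewrite leeNy_eq.
Qed.
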